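(* Let $S$ be a finite set of terms, let $t, r$ be terms with $S \vdash_{dy} r$, and let $x \in \mathscr{V}$ be a variable with $x \notin \mathrm{vars}(S)$. Put $P = \mathrm{pos}_x(t)$, and suppose $P \subseteq \mathbb{A}(S \cup \{x\}, t)$. Then $$\mathbb{A}\bigl(S, t[P \mapsto r]\bigr) \cap \mathrm{Pos}(t) = \mathbb{A}(S \cup \{x\}, t).$$
   Context: Terms. Fix a set $\mathscr{N}$ of names (atoms), a set $\mathscr{V}$ of variables, and keys $\mathscr{K} \subseteq \mathscr{N}$, where each $k \in \mathscr{K}$ has an inverse $k^{-1} \in \mathscr{K}$. Terms are generated by $t ::= x \mid m \mid (t,u) \mid \mathsf{enc}(t,k)$, with $x \in \mathscr{V}$, $m \in \mathscr{N}$, $k \in \mathscr{K} \cup \mathscr{V}$; we write $\{t\}_k$ for $\mathsf{enc}(t,k)$. $\mathrm{vars}(t)$ is the set of variables of $t$, and for a set $S$ of terms $\mathrm{vars}(S) = \bigcup_{s \in S} \mathrm{vars}(s)$. Dolev–Yao derivability. For a set of terms $X$, $X \vdash_{dy} t$ means that $X \vdash t$ is derivable using the following rules: - ax: $X \vdash t$ for $t \in X$; - fst / snd: from $X \vdash (t,u)$ infer $X \vdash t$, respectively $X \vdash u$; - pair: from $X \vdash t$ and $X \vdash u$ infer $X \vdash (t,u)$; - dec: from $X \vdash \{t\}_k$ and $X \vdash k^{-1}$ infer $X \vdash t$; - enc: from $X \vdash t$ and $X \vdash k$ infer $X \vdash \{t\}_k$. Positions. For $m \in \mathscr{N} \cup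 \mathscr{V}$, $\mathrm{Pos}(m) = \{\varepsilon\}$. For $\mathsf{f} \in \{\text{pairing}, \mathsf{enc}\}$, $\mathrm{Pos}(\mathsf{f}(t,u)) = \{\varepsilon\} \cup \{0p : p \in \mathrm{Pos}(t)\} \cup \{1p : p \in \mathrm{Pos}(u)\}$. For $p \in \mathrm{Pos}(t)$, $t|_p$ denotes the subterm of $t$ at position $p$. We write $\mathrm{pos}_x(t) = \{p \in \mathrm{Pos}(t) : t|_p = x\}$. For $P \subseteq \mathrm{Pos}(t)$, $t[P \mapsto r]$ is obtained from $t$ by replacing the subterm at every $p \in P$ by $r$. Abstractable positions. For $p \in \mathrm{Pos}(t)$, let $\mathbb{Q}_p = \{\varepsilon\} \cup \{qi \in \mathrm{Pos}(t) : q \text{ a proper prefix of } p,\ i \in \{0,1\}\}$. Then $\mathbb{A}(S,t) = \{p \in \mathrm{Pos}(t) : S \vdash_{dy} t|_q \text{ for all } q \in \mathbb{Q}_p\}$. *)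

(* Defs.v *)
From mathcomp Require Import all_boot.
From Stdlib Require Import List.
Import ListNotations.

Set Implicit Arguments.
Unset Strict Implicit.

Section DY.
Variables (N : Type) (V : eqType) (isKey : N -> Prop) (inv : N -> N).

(* Terms. The key argument of enc is an arbitrary term syntactically; the grammar of the paper is captured by [wf]. *)
Inductive term :=
| Var of V
| Name of N
| Pair of term & term
| Enc of term & term.

Fixpoint wf (t : term) : Prop :=
  match t with
  | Var _ | Name _ => True
  | Pair a b => wf a /\ wf b
  | Enc a k => wf a /\ ((exists k0, k = Name k0 /\ isKey k0) \/ (exists y, k = Var y))
  end.

Fixpoint occurs (x : V) (t : term) : Prop :=
  match t with
  | Var y => x = y
  | Name _ => False
  | Pair a b | Enc a b => occurs x a \/ occurs x b
  end.

Inductive dy (X : term -> Prop) : term -> Prop :=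
| dy_ax t : X t -> dy X t
| dy_fst t u : dy X (Pair t u) -> dy X t
| dy_snd t u : dy X (Pair t u) -> dy X u
| dy_pair t u : dy X t -> dy X u -> dy X (Pair t u)
| dy_dec t k : isKey k -> dy X (Enc t (Name k)) -> dy X (Name (inv k)) -> dy X t
| dy_enc t k : dy X t -> dy X k -> dy X (Enc t k).

(* Positions: lists of bits, false = 0, true = 1. *)
Definition position := list bool.

Fixpoint subterm_at (t : term) (p : position) : option term :=
  match p, t with
  | [], _ => Some t
  | false :: p', Pair a _ | false :: p', Enc a _ => subterm_at a p'
  | true :: p', Pair _ b | true :: p', Enc _ b => subterm_at b p'
  | _ :: _, _ => None
  end.

Definition inPos (t : term) (p : position) : Prop := subterm_at t p <> None.

Fixpoint is_var_at (x : V) (t : term) (p : position) : bool :=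
  match p, t with
  | [], Var y => y == x
  | [], _ => false
  | false :: p', Pair a _ | false :: p', Enc a _ => is_var_at x a p'
  | true :: p', Pair _ b | true :: p', Enc _ b => is_var_at x b p'
  | _ :: _, _ => false
  end.

Definition pos_x (x : V) (t : term) : position -> bool := is_var_at x t.

Fixpoint replace (t : term) (P : position -> bool) (r : term) : term :=
  if P [] then r else
  match t with
  | Pair a b => Pair (replace a (fun p => P (false :: p)) r)
                     (replace b (fun p => P (true :: p)) r)
  | Enc a b => Enc (replace a (fun p => P (false :: p)) r)
                   (replace b (fun p => P (true :: p)) r)
  | _ => t
  end.

Definition proper_prefix (q p : position) : Prop :=
  exists s, s <> [] /\ p = q ++ s.

Definition Qset (t : term) (p q : position) : Prop :=
  q = [] \/
  exists q0 (i : bool), q = q0 ++ [i] /\ inPos t q /\ proper_prefix q0 p.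

Definition abstractable (X : term -> Prop) (t : term) (p : position) : Prop :=
  inPos t p /\
  forall q, Qset t p q -> exists u, subterm_at t q = Some u /\ dy X u.

Definition of_list (S : list term) : term -> Prop := fun u => In u S.
Definition add_var (S : list term) (x : V) : term -> Prop :=
  fun u => In u S \/ u = Var x.

End DY.

(* Main.v *)
Require Import Defs.
From mathcomp Require Import all_boot.
From Stdlib Require Import List Classical.
Import ListNotations.

Set Implicit Arguments.
Section H.
Variables (N : Type) (V : eqType) (isKey : N -> Prop) (inv : N -> N).
Variables (x : V) (r : term N V).

Fixpoint subst (t : term N V) : term N V :=
  match t with
  | @Var _ _ y => if y == x then r else Var N y
  | @Name _ _ n => Name V n
  | Pair a b => Pair (subst a) (subst b)
  | Enc a b => Enc (subst a) (subst b)
  end.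

Lemma replace_subst (t : term N V) : replace t (pos_x x t) r = subst t.
Proof.
  unfold pos_x; induction t as [y|n|a IHa b IHb|a IHa b IHb]; simpl; auto.
  - rewrite <- IHa, <- IHb; reflexivity.
  - rewrite <- IHa, <- IHb; reflexivity.
Qed.

Lemma subterm_nil (t : term N V) : subterm_at t [] = Some t.
Proof. destruct t; reflexivity. Qed.

Lemma var_nil (t : term N V) : is_var_at x t [] = (match t with @Var _ _ y => y == x | _ => false end).
Proof. destruct t; reflexivity. Qed.

Lemma subterm_app (t : term N V) (a b : position) : subterm_at t (a ++ b) =
  match subterm_at t a with Some w => subterm_at w b | None => None end.
Proof.
  revert t; induction a as [|c a IH]; intros t.
  - destruct t; reflexivity.
  - destruct c, t; simpl; auto.
Qed.

Lemma subterm_subst (t : term N V) q u : subterm_at t q = Some u -> subterm_at (subst t) q = Some (subst u).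
Proof.
  revert t; induction q as [|c q IH]; intros t H.
  - rewrite subterm_nil in H; inversion H; subst; rewrite subterm_nil; auto.
  - destruct c, t; simpl in *; try discriminate; auto; apply IH; auto.
Qed.

Lemma var_at_sub (t : term N V) q u p : subterm_at t q = Some u -> is_var_at x t (q ++ p) = is_var_at x u p.
Proof.
  revert t; induction q as [|c q IH]; intros t H.
  - rewrite subterm_nil in H; inversion H; subst; auto.
  - destruct c, t; simpl in *; try discriminate; auto; apply IH; auto.
Qed.

Lemma occurs_pos (u : term N V) : occurs x u -> exists p, is_var_at x u p = true.
Proof.
  induction u as [y|n|a IHa b IHb|a IHa b IHb]; simpl; intros H.
  - exists []; subst; apply eqxx.
  - contradiction.
  - destruct H as [H|H]; [destruct (IHa H) as [p Hp]; exists (false :: p)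
      | destruct (IHb H) as [p Hp]; exists (true :: p)]; auto.
  - destruct H as [H|H]; [destruct (IHa H) as [p Hp]; exists (false :: p)
      | destruct (IHb H) as [p Hp]; exists (true :: p)]; auto.
Qed.

Lemma subst_nocc (u : term N V) : ~ occurs x u -> subst u = u.
Proof.
  induction u as [y|n|a IHa b IHb|a IHa b IHb]; simpl; intros H; auto.
  - case: eqP => // E; subst; exfalso; apply H; auto.
  - rewrite IHa ?IHb; auto.
  - rewrite IHa ?IHb; auto.
Qed.

Lemma dy_mono (X Y : term N V -> Prop) u : (forall v, X v -> Y v) ->
  dy isKey inv X u -> dy isKey inv Y u.
Proof.
  intros HXY H; induction H.
  - apply dy_ax; auto.
  - eapply dy_fst; eauto.
  - eapply dy_snd; eauto.
  - apply dy_pair; auto.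
  - eapply dy_dec; eauto.
  - apply dy_enc; auto.
Qed.

Lemma dy_subst (S : list (term N V)) u : dy isKey inv (of_list S) r -> (forall s, In s S -> ~ occurs x s) ->
  dy isKey inv (add_var S x) u -> dy isKey inv (of_list S) (subst u).
Proof.
  intros Hr HS H; induction H.
  - destruct H as [H|H].
    + rewrite subst_nocc; auto. apply dy_ax; auto.
    + subst; simpl; rewrite eqxx; auto.
  - eapply dy_fst; eauto.
  - eapply dy_snd; eauto.
  - simpl; apply dy_pair; auto.
  - eapply dy_dec; eauto.
  - simpl; apply dy_enc; auto.
Qed.
End H.
Unset Implicit Arguments.

Theorem lemma1 (N : Type) (V : eqType) (isKey : N -> Prop) (inv : N -> N)
  (inv_key : forall k, isKey k -> isKey (inv k))
  (S : list (term N V)) (t r : term N V) (x : V) :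
  (forall s, In s S -> wf isKey s) -> wf isKey t -> wf isKey r ->
  dy isKey inv (of_list S) r ->
  (forall s, In s S -> ~ occurs x s) ->
  (forall p, pos_x x t p -> abstractable isKey inv (add_var S x) t p) ->
  forall p : position,
    (abstractable isKey inv (of_list S) (replace t (pos_x x t) r) p /\ inPos t p)
    <-> abstractable isKey inv (add_var S x) t p.
Proof.
  intros _ _ _ Hr HS HP p.
  rewrite replace_subst.
  assert (Hpos : forall q, inPos t q -> inPos (subst x r t) q).
  { intros q Hq; unfold inPos in *.
    destruct (subterm_at t q) as [u|] eqn:E; [|congruence].
    rewrite (subterm_subst x r _ _ E); discriminate. }
  split.
  - intros [[_ HA] Hp]. split; auto.
    intros q Hq.
    assert (Hq' : Qset (subst x r t) p q).
    { destruct Hq as [Hq|[q0 [i [E [Hi Hpp]]]]]; [left; auto|right].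
      exists q0, i; split; auto. }
    destruct (HA q Hq') as [u' [Eu' Du']].
    assert (Hin : inPos t q).
    { destruct Hq as [Hq|[q0 [i [E [Hi Hpp]]]]]; auto. rewrite Hq; unfold inPos; rewrite subterm_nil; discriminate. }
    unfold inPos in Hin.
    destruct (subterm_at t q) as [u|] eqn:E; [|congruence].
    exists u; split; auto.
    rewrite (subterm_subst x r _ _ E) in Eu'. inversion Eu'; subst u'.
    destruct (classic (occurs x u)) as [Oc|Oc].
    + destruct (occurs_pos _ _ Oc) as [p' Hp'].
      assert (Hv : pos_x x t (q ++ p')).
      { unfold pos_x; rewrite (var_at_sub x _ _ p' E); auto. }
      destruct (HP _ Hv) as [_ HA'].
      assert (Qset t (q ++ p') q).
      { destruct Hq as [Hq|[q0 [i [E0 [Hi Hpp]]]]]; [left; auto|right].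
        exists q0, i; split; auto; split; auto.
        exists ([i] ++ p'); split; [discriminate|]. subst q; rewrite <- app_assoc; auto. }
      destruct (HA' q H) as [w [Ew Dw]]. rewrite E in Ew; inversion Ew; subst; auto.
    + rewrite (subst_nocc x r _ Oc) in Du'.
      eapply dy_mono; [|exact Du']. intros v Hv; left; exact Hv.
  - intros [Hp HA]. split; [split|]; auto.
    intros q Hq.
    assert (Hq' : Qset t p q).
    { destruct Hq as [Hq|[q0 [i [E [Hi Hpp]]]]]; [left; auto|right].
      exists q0, i; split; auto; split; auto.
      destruct Hpp as [s [Hs Ep]]. subst p q.
      unfold inPos in *. rewrite subterm_app in Hp. rewrite subterm_app.
      destruct (subterm_at t q0) as [w|]; [|congruence].
      destruct s as [|c s]; [congruence|].
      destruct w, c, i; simpl in *; rewrite ?subterm_nil; congruence. }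
    destruct (HA q Hq') as [u [Eu Du]].
    exists (subst x r u); split.
    + apply subterm_subst; auto.
    + apply dy_subst; auto.
Qed.
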